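(* Assume the incoherence condition A3 with parameter $\alpha\in(0,1]$, and let $\lambda>0$. If $$\max\{\|\mathbf W\|_\infty,\ \|R(\dot\Delta)\|_\infty\}\le\frac{\alpha\lambda}{8},$$ then $|\dot Z_{qr}|<1$ for all $(q,r)\in\mathcal M^\perp$, and consequently $\dot{\boldsymbol\Theta}=\hat{\boldsymbol\Theta}_G$.
   Context: Let $\mathbf S\in\mathbb C^{p\times p}$ be Hermitian positive definite, $\boldsymbol\Theta^*=\mathbf S^{-1}$, and $\hat{\mathbf S}$ Hermitian positive semidefinite. $\hat{\boldsymbol\Theta}_G$ is the unique minimiser of $-\log\det\boldsymbol\Theta+\operatorname{Tr}(\hat{\mathbf S}\boldsymbol\Theta)+\lambda\sum_{q,r}|\Theta_{qr}|$ over Hermitian positive definite $\boldsymbol\Theta$. Let $E(\boldsymbol\Theta^* )=\{(q,r):\Theta^*_{qr}\ne0,q\ne r\}$, $\mathcal M=E(\boldsymbol\Theta^* )\cup\{(q,q)\}_{q=1}^p$, $\mathcal M^\perp$ its complement. Witness: $\dot{\boldsymbol\Theta}$ is the minimiser of the same objective over Hermitian positive definite $\boldsymbol\Theta$ with $\Theta_{qr}=0$ for $(q,r)\in\mathcal M^\perp$; $\dot{\mathbf Z}$ has entries on $\mathcal M$ given by a subgradient of $\sum|\Theta_{qr}|$ at $\dot{\boldsymbol\Theta}$ ($\dot Z_{qq}=1$, $\dot Z_{qr}=\dot\Theta_{qr}/|\dot\Theta_{qr}|$ if nonzero, modulus $\le1$ otherwise) satisfying $\hat{\mathbf S}_{\mathcal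 M}-(\dot{\boldsymbol\Theta}^{-1})_{\mathcal M}+\lambda\dot{\mathbf Z}_{\mathcal M}=0$, and on $\mathcal M^\perp$ defined by $\dot Z_{qr}=\lambda^{-1}(-\hat S_{qr}+(\dot{\boldsymbol\Theta}^{-1})_{qr})$. Set $\mathbf W=\hat{\mathbf S}-\mathbf S$, $\dot\Delta=\dot{\boldsymbol\Theta}-\boldsymbol\Theta^*$, $R(\dot\Delta)=\dot{\boldsymbol\Theta}^{-1}-\boldsymbol\Theta^{*-1}+\boldsymbol\Theta^{*-1}\dot\Delta\boldsymbol\Theta^{*-1}$. $\|\mathbf A\|_\infty=\max_{q,r}|A_{qr}|$. Hessian $\Gamma=\overline{\mathbf S}\otimes\mathbf S$ indexed by pairs $(q,r)$ (column-stacking vectorisation, $\operatorname{vec}(\mathbf S\Delta\mathbf S)=\Gamma\operatorname{vec}\Delta$), $\Gamma_{AB}$ its submatrix with rows in $A$ and columns in $B$. A3: $\max_{e\in\mathcal M^\perp}\|\Gamma_{e\mathcal M}(\Gamma_{\mathcal M\mathcal M})^{-1}\|_1\le1-\alpha$, with $\|\cdot\|_1$ the sum of moduli of the row's entries. *)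

(* Defs.v *)
From HB Require Import structures.
From mathcomp Require Import all_boot all_order all_algebra.
From mathcomp Require Import complex.
From mathcomp Require Import reals exp.
Set Implicit Arguments. Unset Strict Implicit. Unset Printing Implicit Defensive.
Import Order.TTheory GRing.Theory Num.Theory.
Local Open Scope ring_scope.

Section Defs.
Variable R : realType.
Local Notation C := (R[i]).
Variable p : nat.

Definition cmod (z : C) : R := complex.Re `|z|.

Definition hermitian (A : 'M[C]_p) : Prop :=
  forall i j : 'I_p, A j i = conjc (A i j).

Definition qform (A : 'M[C]_p) (v : 'cV[C]_p) : C :=
  \sum_(i < p) \sum_(j < p) conjc (v i 0) * A i j * v j 0.

Definition hpd (A : 'M[C]_p) : Prop :=
  hermitian A /\ forall v : 'cV[C]_p, v != 0 -> 0 < qform A v.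
Definition hpsd (A : 'M[C]_p) : Prop :=
  hermitian A /\ forall v : 'cV[C]_p, 0 <= qform A v.

Definition maxnorm (A : 'M[C]_p) : R :=
  \big[Num.max/0]_(q < p) \big[Num.max/0]_(r < p) cmod (A q r).

(* graphical-lasso objective
   -log det Theta + Tr(Sh Theta) + lam * sum_{q,r} |Theta_{qr}|
   (det and trace are real for Hermitian Theta, Sh; we take real parts) *)
Definition glasso_obj (Sh : 'M[C]_p) (lam : R) (Th : 'M[C]_p) : R :=
  - ln (complex.Re (\det Th)) + complex.Re (\tr (Sh *m Th))
  + lam * \sum_(q < p) \sum_(r < p) cmod (Th q r).

Definition is_glasso_min (Sh : 'M[C]_p) (lam : R) (Th : 'M[C]_p) : Prop :=
  hpd Th /\ forall Th' : 'M[C]_p, hpd Th' ->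
    glasso_obj Sh lam Th <= glasso_obj Sh lam Th'.

Definition inM (Thstar : 'M[C]_p) (e : 'I_p * 'I_p) : bool :=
  (e.1 == e.2) || (Thstar e.1 e.2 != 0).

Definition is_restricted_min (Thstar Sh : 'M[C]_p) (lam : R) (Th : 'M[C]_p)
  : Prop :=
  [/\ hpd Th,
      (forall q r, ~~ inM Thstar (q, r) -> Th q r = 0) &
      forall Th' : 'M[C]_p, hpd Th' ->
        (forall q r, ~~ inM Thstar (q, r) -> Th' q r = 0) ->
        glasso_obj Sh lam Th <= glasso_obj Sh lam Th'].

(* Hessian Gamma = conj(S) (x) S indexed by pairs (q,r), column-stacking:
   Gamma_{(q,r),(q',r')} = conj(S_{r r'}) * S_{q q'} *)
Definition Gamma (S : 'M[C]_p) (e f : 'I_p * 'I_p) : C :=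
  conjc (S e.2 f.2) * S e.1 f.1.

Definition Mset (Thstar : 'M[C]_p) : {set 'I_p * 'I_p} :=
  [set e | inM Thstar e].

Definition Gamma_MM (S Thstar : 'M[C]_p) : 'M[C]_#|Mset Thstar| :=
  \matrix_(i, j) Gamma S (enum_val i) (enum_val j).

Definition Gamma_eM (S Thstar : 'M[C]_p) (e : 'I_p * 'I_p)
  : 'rV[C]_#|Mset Thstar| :=
  \row_j Gamma S e (enum_val j).

Definition incoherence (S Thstar : 'M[C]_p) (alpha : R) : Prop :=
  forall e : 'I_p * 'I_p, ~~ inM Thstar e ->
    \sum_j cmod ((Gamma_eM S Thstar e *m invmx (Gamma_MM S Thstar)) 0 j)
      <= 1 - alpha.

Definition remainder (Thstar Thd : 'M[C]_p) : 'M[C]_p :=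
  invmx Thd - invmx Thstar
  + invmx Thstar *m (Thd - Thstar) *m invmx Thstar.

End Defs.

(* Main.v *)
Require Import Defs.
From HB Require Import structures.
From mathcomp Require Import all_boot all_order all_algebra.
From mathcomp Require Import complex.
From mathcomp Require Import reals exp ring lra.
Import Order.TTheory GRing.Theory Num.Theory.
Set Implicit Arguments. Unset Strict Implicit. Unset Printing Implicit Defensive.
Local Open Scope complex_scope.
Local Open Scope ring_scope.


Section Basics.
Variable R : realType.
Local Notation C := R[i].

Definition ct m n (A : 'M[C]_(m,n)) : 'M[C]_(n,m) := (map_mx conjc A)^T.

Lemma ctE m n (A : 'M[C]_(m,n)) i j : ct A i j = conjc (A j i).
Proof. by rewrite !mxE. Qed.

Lemma ctK m n (A : 'M[C]_(m,n)) : ct (ct A) = A.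
Proof. by apply/matrixP=> i j; rewrite !ctE conjcK. Qed.

Lemma ct_mul m n k (A : 'M[C]_(m,n)) (B : 'M[C]_(n,k)) :
  ct (A *m B) = ct B *m ct A.
Proof. by rewrite /ct map_mxM trmx_mul. Qed.

Lemma ctD m n (A B : 'M[C]_(m,n)) : ct (A + B) = ct A + ct B.
Proof. by apply/matrixP=> i j; rewrite !(ctE, mxE) rmorphD. Qed.

Lemma ctN m n (A : 'M[C]_(m,n)) : ct (- A) = - ct A.
Proof. by apply/matrixP=> i j; rewrite !(ctE, mxE) rmorphN. Qed.

Lemma ct0 m n : ct (0 : 'M[C]_(m,n)) = 0.
Proof. by apply/matrixP=> i j; rewrite !(ctE, mxE) rmorph0. Qed.

Lemma ctZ m n (a : C) (A : 'M[C]_(m,n)) : ct (a *: A) = conjc a *: ct A.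
Proof. apply/matrixP=> i j; rewrite !(ctE, mxE). by rewrite rmorphM. Qed.

Lemma ct_scalar n (a : C) : ct (a%:M : 'M_n) = (conjc a)%:M.
Proof.
by apply/matrixP=> i j; rewrite !(ctE, mxE) rmorphMn eq_sym.
Qed.

Lemma ct_block m1 m2 n1 n2 (A : 'M[C]_(m1,n1)) (B : 'M[C]_(m1,n2))
  (Cc : 'M[C]_(m2,n1)) (D : 'M[C]_(m2,n2)) :
  ct (block_mx A B Cc D) = block_mx (ct A) (ct Cc) (ct B) (ct D).
Proof. by rewrite /ct map_block_mx tr_block_mx. Qed.

Lemma det_ct n (A : 'M[C]_n) : \det (ct A) = conjc (\det A).
Proof. by rewrite /ct det_tr; apply: (det_map_mx (conjc : {rmorphism C -> C})). Qed.

Lemma ct_unit n (A : 'M[C]_n) : (ct A \in unitmx) = (A \in unitmx).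
Proof. by rewrite !unitmxE det_ct fmorph_unit. Qed.

Lemma ct_inv n (A : 'M[C]_n) : ct (invmx A) = invmx (ct A).
Proof. by rewrite /ct map_invmx trmx_inv. Qed.

Lemma hermitianE n (A : 'M[C]_n) : Defs.hermitian A <-> ct A = A.
Proof.
split=> [h|h i j]; first by apply/matrixP=> i j; rewrite ctE h conjcK.
by rewrite -{1}h ctE.
Qed.

Lemma qformE n (A : 'M[C]_n) v : qform A v = (ct v *m A *m v) 0 0.
Proof.
rewrite /qform mxE exchange_big; apply: eq_bigr=> j _.
rewrite mxE mulr_suml; apply: eq_bigr=> i _.
by rewrite ctE.
Qed.

Lemma hpdE n (A : 'M[C]_n) : hpd A <->
  ct A = A /\ forall v : 'cV[C]_n, v != 0 -> 0 < (ct v *m A *m v) 0 0.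
Proof.
split=> [[h1 h2]|[h1 h2]]; split; first by apply/hermitianE.
- by move=> v /h2; rewrite qformE.
- by apply/hermitianE.
- by move=> v /h2; rewrite qformE.
Qed.

Lemma hpd_congr n (A L : 'M[C]_n) : hpd A -> L \in unitmx ->
  hpd (ct L *m A *m L).
Proof.
move=> /hpdE [h1 h2] hL; apply/hpdE; split.
  by rewrite !ct_mul ctK h1 mulmxA.
move=> v hv; have hLv : L *m v != 0.
  apply: contra hv => /eqP h.
  by rewrite -(mul1mx v) -(mulVmx hL) -mulmxA h mulmx0.
by have := h2 _ hLv; rewrite ct_mul !mulmxA.
Qed.

Lemma pos_real (x : C) : 0 < x -> x = (complex.Re x)%:C /\ 0 < complex.Re x.
Proof.
case: x => a b; rewrite ltcE /= => /andP [/eqP -> ha].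
by split.
Qed.

Lemma conjc_pos (x : C) : 0 < x -> conjc x = x.
Proof. by move=> /pos_real [-> _]; rewrite conjc_real. Qed.

Lemma cmodE (z : C) : `|z| = (cmod z)%:C.
Proof. by rewrite /cmod normc_def. Qed.

Lemma cmod_ge0 (z : C) : 0 <= cmod z.
Proof. by have := normr_ge0 z; rewrite cmodE ler0c. Qed.

Lemma cmodD (x y : C) : cmod (x + y) <= cmod x + cmod y.
Proof. by have := ler_normD x y; rewrite !cmodE -rmorphD lecR. Qed.

Lemma cmodM (x y : C) : cmod (x * y) = cmod x * cmod y.
Proof. by apply: complexI; rewrite rmorphM -!cmodE normrM. Qed.

Lemma cmodN (x : C) : cmod (- x) = cmod x.
Proof. by apply: complexI; rewrite -!cmodE normrN. Qed.

Lemma cmodR (a : R) : cmod (a%:C) = `|a|.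
Proof. by rewrite /cmod normc_def /= expr0n /= addr0 sqrtr_sqr. Qed.

Lemma cmod_conj (x : C) : cmod (conjc x) = cmod x.
Proof. by apply: complexI; rewrite -!cmodE normcJ. Qed.

Lemma cmod_eq0 (x : C) : (cmod x == 0) = (x == 0).
Proof. by rewrite -(inj_eq (@complexI R)) -cmodE normr_eq0. Qed.

Lemma Re_ge_cmod (x : C) : complex.Re x <= cmod x.
Proof.
have := normc_ge_Re x; rewrite cmodE lecR => h.
by apply: le_trans h; apply: ler_norm.
Qed.

Lemma maxnorm_ge n (A : 'M[C]_n) q r : cmod (A q r) <= maxnorm A.
Proof.
rewrite /maxnorm (bigD1 q) //= (bigD1 r) //=.
by rewrite le_max (le_max _ (cmod (A q r))) lexx.
Qed.

End Basics.

Section Block.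
Variable R : realType.
Local Notation C := R[i].

Lemma ct_col m1 m2 n (A : 'M[C]_(m1,n)) (B : 'M[C]_(m2,n)) :
  ct (col_mx A B) = row_mx (ct A) (ct B).
Proof. by rewrite /ct map_col_mx tr_col_mx. Qed.

Lemma tr_ct_mul m n (B : 'M[C]_(m,n)) :
  \tr (ct B *m B) = (\sum_i \sum_j cmod (B j i) ^+ 2)%:C.
Proof.
rewrite /mxtrace rmorph_sum; apply: eq_bigr=> i _.
rewrite mxE rmorph_sum; apply: eq_bigr=> j _.
rewrite ctE rmorphXn; transitivity (`|B j i| ^+ 2); first by rewrite sqr_normc mulrC.
by rewrite cmodE.
Qed.

Lemma sum_sq_eq0 m n (B : 'M[C]_(m,n)) :
  \sum_i \sum_j cmod (B j i) ^+ 2 = 0 -> B = 0.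
Proof.
move=> h; apply/matrixP=> j i; rewrite mxE.
have h0 : forall i, 0 <= \sum_j cmod (B j i) ^+ 2.
  by move=> i'; apply: sumr_ge0 => k _; apply: sqr_ge0.
have /eqP := h; rewrite psumr_eq0; last by move=> i' _; apply: h0.
move=> /allP /(_ i (mem_index_enum _)) /=; rewrite psumr_eq0; last first.
  by move=> k _; apply: sqr_ge0.
move=> /allP /(_ j (mem_index_enum _)) /=.
by rewrite sqrf_eq0 cmod_eq0 => /eqP.
Qed.

Variable n : nat.
Implicit Type A : 'M[C]_(1 + n).

Definition ba A := ulsubmx A 0 0.
Definition bu A := ursubmx A.
Definition schur A := drsubmx A - (ba A)^-1 *: (ct (bu A) *m bu A).
Definition bP A : 'M[C]_(1 + n) := block_mx 1%:M ((ba A)^-1 *: bu A) 0 1%:M.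
Definition bD A : 'M[C]_(1 + n) := block_mx (ba A)%:M 0 0 (schur A).

Lemma ba_pos A : hpd A -> 0 < ba A.
Proof.
move=> /hpdE [_ h].
have hv : col_mx (1%:M : 'M[C]_1) (0 : 'M[C]_(n, 1)) != 0.
  by rewrite col_mx_eq0 negb_and oner_neq0.
have := h _ hv; rewrite ct_col ct0 ct_scalar rmorph1 -[A]submxK.
rewrite mul_row_block mul_row_col !mul1mx !mul0mx !addr0.
by rewrite mulmx1 mulmx0 addr0 /ba submxK.
Qed.

Lemma herm_blocks A : ct A = A ->
  [/\ ct (ulsubmx A) = ulsubmx A, dlsubmx A = ct (ursubmx A)
    & ct (drsubmx A) = drsubmx A].
Proof.
rewrite -{1 2}[A]submxK ct_block => /eq_block_mx [h1 h2 h3 h4].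
by split=> //; rewrite -h3 ctK.
Qed.

Lemma ba_conj A : hpd A -> conjc (ba A) = ba A.
Proof. by move=> /ba_pos /conjc_pos. Qed.

Lemma bP_unit A : bP A \in unitmx.
Proof. by rewrite unitmxE /bP det_ublock !det1 mulr1 unitr1. Qed.

Lemma factorE A : hpd A -> A = ct (bP A) *m bD A *m bP A.
Proof.
move=> hA; have hapos := ba_pos hA; have [_ hdl _] := herm_blocks (proj1 (proj1 (hpdE A) hA)).
have ha0 : ba A != 0 by rewrite gt_eqF.
rewrite /bP /bD ct_block ct_scalar rmorph1 ct0 ctZ conjc_inv ba_conj // ct_scalar rmorph1.
rewrite mulmx_block !mul1mx !mul0mx !mulmx0 !addr0 add0r.
rewrite -scalemxAl mul_mx_scalar scalerA mulVf // scale1r.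
rewrite mulmx_block conjc1 !mul1mx !mulmx1 !mul0mx !mulmx0 !addr0.
rewrite mul_scalar_mx scalerA mulfV // scale1r.
rewrite -scalemxAr /schur addrCA subrr addr0.
rewrite -[ba A]/(ulsubmx A 0 0) -mx11_scalar -hdl.
by rewrite submxK.
Qed.

Lemma bD_hpd A : hpd A -> hpd (bD A).
Proof.
move=> hA.
have -> : bD A = ct (invmx (bP A)) *m A *m invmx (bP A).
  have hf := factorE hA; have hu := bP_unit A; move: hf hu.
  set P := bP A; set D := bD A => hf hu.
  rewrite hf ct_inv !mulmxA mulVmx ?ct_unit // mul1mx.
  by rewrite -mulmxA mulmxV // mulmx1.
by apply: hpd_congr => //; rewrite unitmx_inv bP_unit.
Qed.

Lemma schur_hpd A : hpd A -> hpd (schur A).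
Proof.
move=> /bD_hpd /hpdE [h1 h2]; apply/hpdE; split.
  by move: h1; rewrite /bD ct_block => /eq_block_mx [].
move=> v hv.
have hw : col_mx (0 : 'M[C]_(1, 1)) v != 0 by rewrite col_mx_eq0 negb_and hv orbT.
have := h2 _ hw; rewrite ct_col ct0 /bD mul_row_block mul_row_col.
by rewrite !(mul0mx, mulmx0, add0r, addr0).
Qed.

Lemma det_factor A : hpd A -> \det A = ba A * \det (schur A).
Proof.
move=> hA; rewrite {1}(factorE hA) !det_mulmx det_ct.
rewrite /bP det_ublock !det1 mulr1 rmorph1 mul1r mulr1.
by rewrite /bD det_ublock det_scalar1.
Qed.

Lemma tr_factor A : \tr A = ba A + \tr (schur A)
   + (ba A)^-1 * \tr (ct (bu A) *m bu A).
Proof.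
rewrite -{1}[A]submxK mxtrace_block /schur -scaleNr mxtraceD mxtraceZ.
rewrite [ulsubmx A]mx11_scalar mxtrace_scalar /ba.
ring.
Qed.

End Block.

Section LD.
Variable R : realType.
Local Notation C := R[i].
Local Notation Re := (@complex.Re R).

Lemma ReD (x y : C) : Re (x + y) = Re x + Re y.
Proof. by case: x; case: y. Qed.
Lemma ReN (x : C) : Re (- x) = - Re x.
Proof. by case: x. Qed.
Lemma ReB (x y : C) : Re (x - y) = Re x - Re y.
Proof. by rewrite ReD ReN. Qed.
Lemma ReR (r : R) : Re (r%:C) = r.
Proof. by []. Qed.
Lemma ReMR (r : R) (x : C) : Re (r%:C * x) = r * Re x.
Proof. by case: x => a b /=; ring. Qed.
Lemma ReMRr (r : R) (x : C) : Re (x * r%:C) = Re x * r.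
Proof. by rewrite mulrC ReMR mulrC. Qed.
Lemma Re_nat k : Re (k%:R) = k%:R.
Proof. by rewrite -(rmorph_nat (real_complex R)). Qed.

Lemma ln_le_sub1 (x : R) : 0 < x -> ln x <= x - 1.
Proof.
move=> hx; have := expR_ge1Dx (ln x); rewrite lnK ?posrE //.
by move=> h; rewrite lerBrDl.
Qed.

Lemma ln_eq_sub1 (x : R) : 0 < x -> x - 1 <= ln x -> x = 1.
Proof.
move=> hx h; have [h0|h0] := eqVneq (ln x) 0.
  by apply/eqP; rewrite -(ln_eq0 hx) h0.
have := expR_gt1Dx h0; rewrite lnK ?posrE // => h1.
exfalso; move: h h1; lra.
Qed.

Lemma LD0 n (A : 'M[C]_n) : hpd A ->
  [/\ 0 < \det A, ln (Re (\det A)) <= Re (\tr A) - n%:R &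
      (Re (\tr A) - n%:R <= ln (Re (\det A)) -> A = 1%:M)].
Proof.
elim: n A => [|n IH] A hA.
  have hdet : \det A = 1 by rewrite det_mx00.
  have htr : \tr A = 0 by rewrite /mxtrace big_ord0.
  rewrite hdet htr /= ln1 subr0; split=> //.
  by move=> _; apply/matrixP=> i; case: i.
have hA' : hpd (A : 'M[C]_(1 + n)) by [].
have hapos := ba_pos hA'.
have [ha har] := pos_real hapos.
set ar := Re (ba A) in ha har.
have hS := schur_hpd hA'.
have [hds hln heq] := IH _ hS.
have [hd hdr] := pos_real hds.
set dr := Re (\det (schur A)) in hd hdr.
have hdet : \det A = (ar * dr)%:C by rewrite (det_factor hA') ha hd rmorphM.
have hdetr : Re (\det A) = ar * dr by rewrite hdet.
have [T hT hT0] : exists2 T : R, \tr (ct (bu A) *m bu A) = T%:C & 0 <= T.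
  exists (\sum_i \sum_j cmod (bu A j i) ^+ 2); first exact: tr_ct_mul.
  by apply: sumr_ge0 => i _; apply: sumr_ge0 => j _; apply: sqr_ge0.
have htr : Re (\tr A) = ar + Re (\tr (schur A)) + ar^-1 * T.
  rewrite (tr_factor A) hT ha -fmorphV -rmorphM !ReD.
  by rewrite -ha.
have hln2 : ln (Re (\det A)) = ln ar + ln dr by rewrite hdetr lnM ?posrE.
have h1 := ln_le_sub1 har.
have hTr : 0 <= ar^-1 * T by rewrite mulr_ge0 // invr_ge0 ltW.
have hn : (n.+1)%:R = n%:R + 1 :> R by rewrite -addn1 natrD.
split.
- by rewrite hdet ltcR mulr_gt0.
- by rewrite hln2 htr hn; move: hln h1 hTr; lra.
move=> hle.
have hl2 : Re (\tr (schur A)) - n%:R <= ln dr.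
  by move: hle hln h1 hTr; rewrite hln2 htr hn; lra.
have hl1 : ar - 1 <= ln ar.
  by move: hle hln h1 hTr; rewrite hln2 htr hn; lra.
have hl3 : ar^-1 * T <= 0.
  by move: hle hln h1 hTr; rewrite hln2 htr hn; lra.
have har1 := ln_eq_sub1 har hl1.
have hS1 := heq hl2.
have hT1 : T = 0 by move: hl3 hTr; rewrite har1 invr1 mul1r; lra.
have hu : bu A = 0.
  apply: sum_sq_eq0; apply: complexI; rewrite -tr_ct_mul hT hT1.
  by [].
have [_ hdl _] := herm_blocks (proj1 (proj1 (hpdE A) hA)).
transitivity (block_mx (@ulsubmx _ 1 n 1 n A) (@ursubmx _ 1 n 1 n A)
   (@dlsubmx _ 1 n 1 n A) (@drsubmx _ 1 n 1 n A)); first by rewrite submxK.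
rewrite hdl -/(bu A) hu ct0.
have -> : @drsubmx _ 1 n 1 n A = 1%:M.
  move: hS1; rewrite /schur hu mulmx0 scaler0 subr0 => ->.
  by [].
have -> : @ulsubmx _ 1 n 1 n A = 1%:M.
  by rewrite [@ulsubmx _ 1 n 1 n A]mx11_scalar -/(ba A) ha har1.
exact (esym (scalar_mx_block 1 n (1 : C))).
Qed.

Lemma cholesky n (A : 'M[C]_n) : hpd A ->
  exists2 L : 'M[C]_n, L \in unitmx & A = ct L *m L.
Proof.
elim: n A => [|n IH] A hA.
  exists 1%:M; first by rewrite unitmx1.
  by apply/matrixP=> i; case: i.
have hA' : hpd (A : 'M[C]_(1 + n)) by [].
have hapos := ba_pos hA'.
have [ha har] := pos_real hapos.
set ar := Re (ba A) in ha har.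
have [L' hL' hSL] := IH _ (schur_hpd hA').
set s := (Num.sqrt ar)%:C.
pose K : 'M[C]_(1 + n) := block_mx s%:M 0 0 L'.
have hK : bD A = ct K *m K.
  rewrite /K ct_block ct0 ct_scalar mulmx_block !mulmx0 !mul0mx !addr0 add0r.
  rewrite -hSL /bD -scalar_mxM /s conjc_real -rmorphM -expr2 sqr_sqrtr ?ltW //.
  by rewrite ct0 mul0mx ha.
exists (K *m bP A).
  have hdK : \det K = s * \det L' by rewrite /K det_ublock det_scalar1.
  rewrite unitmx_mul bP_unit andbT unitmxE hdK.
  rewrite unitrM -unitmxE hL' andbT unitfE /s.
  by rewrite (inj_eq (@complexI R)) sqrtr_eq0 -ltNge.
by rewrite {1}(factorE hA') hK ct_mul !mulmxA.
Qed.

End LD.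

Section LD2.
Variable R : realType.
Local Notation C := R[i].
Local Notation Re := (@complex.Re R).

Lemma ct1 n : ct (1%:M : 'M[C]_n) = 1%:M.
Proof. by rewrite ct_scalar conjc1. Qed.

Lemma LD2 n (Th Th' : 'M[C]_n) : hpd Th -> hpd Th' ->
  [/\ 0 < Re (\det Th), 0 < Re (\det Th'),
   ln (Re (\det Th')) - ln (Re (\det Th)) <= Re (\tr (invmx Th *m Th')) - n%:R &
   (Re (\tr (invmx Th *m Th')) - n%:R <= ln (Re (\det Th')) - ln (Re (\det Th))
     -> Th' = Th)].
Proof.
move=> hT hT'.
have [L hL hTL] := cholesky hT.
set Li := invmx L.
have hLi : Li \in unitmx by rewrite unitmx_inv.
have hA := hpd_congr hT' hLi.
have [dA _ _] := LD0 hA; have [_ lnA eqA] := LD0 hA.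
have [dT _ _] := LD0 hT; have [dT' _ _] := LD0 hT'.
have [eA pA] := pos_real dA; have [eT pT] := pos_real dT; have [eT' pT'] := pos_real dT'.
have e1 : \det Li * \det L = 1 by rewrite -det_mulmx mulVmx // det1.
have hdet : \det (ct Li *m Th' *m Li) * \det Th = \det Th'.
  rewrite hTL !det_mulmx !det_ct.
  transitivity (\det Th' * (conjc (\det Li * \det L) * (\det Li * \det L))).
    by rewrite rmorphM; ring.
  by rewrite e1 conjc1 !mulr1.
have hdetr : Re (\det (ct Li *m Th' *m Li)) * Re (\det Th) = Re (\det Th').
  by rewrite -hdet [in RHS]eA [in RHS]eT ReMR.
have hln : ln (Re (\det (ct Li *m Th' *m Li))) =
           ln (Re (\det Th')) - ln (Re (\det Th)).
  by rewrite -hdetr lnM ?posrE // addrK.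
have htr : \tr (ct Li *m Th' *m Li) = \tr (invmx Th *m Th').
  have hTu : Th \in unitmx by rewrite hTL unitmx_mul ct_unit hL.
  have e : Th *m (Li *m ct Li) = 1%:M.
    by rewrite hTL -mulmxA (mulmxA L) mulmxV // mul1mx -ct_mul mulVmx // ct1.
  have hX : invmx Th = Li *m ct Li.
    by rewrite -[RHS]mul1mx -(mulVmx hTu) -mulmxA e mulmx1.
  by rewrite mxtrace_mulC mulmxA hX.
split=> //; first by rewrite -hln -htr.
rewrite -hln -htr => /eqA hA1.
rewrite hTL.
have -> : Th' = ct L *m (ct Li *m Th' *m Li) *m L.
  rewrite !mulmxA -ct_mul mulVmx // ct1 mul1mx -mulmxA.
  by rewrite [Li *m L]mulVmx // mulmx1.
by rewrite hA1 mulmx1.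
Qed.

End LD2.

Section GammaSec.
Variable R : realType.
Local Notation C := R[i].
Variable p : nat.
Variables (S Thstar : 'M[C]_p).
Hypothesis hSh : ct S = S.

Lemma Gamma_sum (X : 'M[C]_p) e :
  \sum_f Gamma S e f * X f.1 f.2 = (S *m X *m S) e.1 e.2.
Proof.
rewrite -(pair_bigA _ (fun q' r' => Gamma S e (q', r') * X q' r')) /=.
case: e => q r /=.
rewrite mxE exchange_big; apply: eq_bigr => r' _.
rewrite mxE mulr_suml; apply: eq_bigr => q' _.
have hc : forall a b, conjc (S a b) = S b a.
  by move=> a b; rewrite -[in RHS]hSh ctE.
rewrite /Gamma /= hc; ring.
Qed.

Lemma sum_M (F : 'I_p * 'I_p -> C) :
  (forall f, ~~ inM Thstar f -> F f = 0) ->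
  \sum_(j < #|Mset Thstar|) F (enum_val j) = \sum_f F f.
Proof.
move=> hF; rewrite -(big_enum_val (A := mem (Mset Thstar))) /=.
rewrite [RHS](bigID (fun f => f \in Mset Thstar)) /=.
rewrite [X in _ = _ + X]big1 ?addr0 //.
by move=> f; rewrite inE => /hF.
Qed.

Lemma Gamma_eM_mul e (X : 'M[C]_p) :
  (forall f, ~~ inM Thstar f -> X f.1 f.2 = 0) ->
  (Gamma_eM S Thstar e *m \col_j X (enum_val j).1 (enum_val j).2) 0 0
   = (S *m X *m S) e.1 e.2.
Proof.
move=> hX; rewrite mxE -Gamma_sum -sum_M.
  by apply: eq_bigr => j _; rewrite !mxE.
by move=> f /hX ->; rewrite mulr0.
Qed.

Lemma Gamma_MM_mul i (X : 'M[C]_p) :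
  (forall f, ~~ inM Thstar f -> X f.1 f.2 = 0) ->
  (Gamma_MM S Thstar *m \col_j X (enum_val j).1 (enum_val j).2) i 0
   = (S *m X *m S) (enum_val i).1 (enum_val i).2.
Proof.
move=> hX; rewrite mxE -Gamma_sum -sum_M.
  by apply: eq_bigr => j _; rewrite !mxE.
by move=> f /hX ->; rewrite mulr0.
Qed.

Lemma sum_sq_pos m n (B : 'M[C]_(m,n)) : B != 0 ->
  0 < \sum_i \sum_j cmod (B j i) ^+ 2.
Proof.
move=> hB; rewrite lt_def; apply/andP; split.
  by apply/eqP => /sum_sq_eq0 h; rewrite h eqxx in hB.
by apply: sumr_ge0 => i _; apply: sumr_ge0 => j _; apply: sqr_ge0.
Qed.

Hypothesis hS : hpd S.

Lemma Gamma_MM_pos (w : 'cV[C]_#|Mset Thstar|) : w != 0 ->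
  0 < (ct w *m Gamma_MM S Thstar *m w) 0 0.
Proof.
move=> hw.
pose X : 'M[C]_p := \matrix_(q, r) \sum_(j | enum_val j == (q, r)) w j 0.
have hXe : forall i, X (enum_val i).1 (enum_val i).2 = w i 0.
  move=> i; rewrite mxE -surjective_pairing.
  rewrite (big_pred1 i) // => j /=.
  by rewrite (inj_eq enum_val_inj).
have hX0 : forall f, ~~ inM Thstar f -> X f.1 f.2 = 0.
  move=> f hf; rewrite mxE -surjective_pairing big_pred0 // => j.
  apply/negP => /eqP hj; have := enum_valP j; rewrite hj inE.
  by rewrite (negbTE hf).
have hwX : w = \col_j X (enum_val j).1 (enum_val j).2.
  by apply/matrixP => i k; rewrite mxE hXe (ord1 k).
have e1 : (ct w *m Gamma_MM S Thstar *m w) 0 0 = \tr (ct X *m (S *m X *m S)).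
  rewrite -qformE /qform.
  transitivity (\sum_i conjc (w i 0) * (S *m X *m S) (enum_val i).1 (enum_val i).2).
    apply: eq_bigr => i _; rewrite -(Gamma_MM_mul i hX0) -hwX mxE mulr_sumr.
    by apply: eq_bigr => j _; rewrite mulrA.
  rewrite (eq_bigr (fun i => conjc (X (enum_val i).1 (enum_val i).2) *
            (S *m X *m S) (enum_val i).1 (enum_val i).2)); last first.
    by move=> i _; rewrite hXe.
  rewrite (sum_M (F := fun f => conjc (X f.1 f.2) * (S *m X *m S) f.1 f.2)); last first.
    by move=> f /hX0 ->; rewrite rmorph0 mul0r.
  rewrite -(pair_bigA _ (fun q r => conjc (X q r) * (S *m X *m S) q r)) /=.
  rewrite /mxtrace exchange_big; apply: eq_bigr => r _.
  by rewrite mxE; apply: eq_bigr => q _; rewrite ctE.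
have [L hL hSL] := cholesky hS.
set Y := L *m X *m ct L.
have e2 : \tr (ct X *m (S *m X *m S)) = \tr (ct Y *m Y).
  rewrite /Y !ct_mul ctK hSL.
  rewrite !mulmxA mxtrace_mulC !mulmxA.
  by [].
have hY : Y != 0.
  apply/eqP => hY0.
  have hX : X = 0.
    have -> : X = invmx L *m Y *m invmx (ct L).
      rewrite /Y !mulmxA mulVmx // mul1mx -mulmxA mulmxV ?ct_unit //.
      by rewrite mulmx1.
    by rewrite hY0 mulmx0 mul0mx.
  move/eqP: hw; apply; apply/matrixP => i k.
  by rewrite (ord1 k) -hXe hX !mxE.
rewrite e1 e2 tr_ct_mul ltcR.
exact: sum_sq_pos.
Qed.

Lemma Gamma_MM_unit : Gamma_MM S Thstar \in unitmx.
Proof.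
rewrite unitmxE unitfE; apply/negP => /det0P [v hv hv0].
have hw : ct v != 0.
  by apply: contra hv => /eqP h; rewrite -(ctK v) h ct0.
have := Gamma_MM_pos hw.
by rewrite ctK hv0 mul0mx mxE ltxx.
Qed.

End GammaSec.

Section Helpers.
Variable R : realType.
Local Notation C := R[i].
Local Notation Re := (@complex.Re R).

Lemma hpd_unit n (A : 'M[C]_n) : hpd A -> A \in unitmx.
Proof.
move=> /cholesky [L hL ->]; by rewrite unitmx_mul ct_unit hL.
Qed.

Lemma hpd_diag n (A : 'M[C]_n) q : hpd A -> 0 < A q q.
Proof.
move=> [_ h].
pose v : 'cV[C]_n := \col_i (i == q)%:R.
have hv : v != 0.
  apply/negP => /eqP /matrixP /(_ q 0); rewrite !mxE eqxx => /eqP.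
  by rewrite oner_eq0.
have := h v hv; rewrite /qform.
rewrite (bigD1 q) //= [X in _ + X]big1 ?addr0; last first.
  move=> i hi; apply: big1 => j _; rewrite !mxE (negbTE hi) rmorph0.
  by rewrite !mul0r.
rewrite (bigD1 q) //= [X in _ + X]big1 ?addr0; last first.
  by move=> j hj; rewrite !mxE (negbTE hj) mulr0.
by rewrite !mxE eqxx conjc1 mul1r mulr1.
Qed.

Lemma cmod_sum (I : finType) (F : I -> C) :
  cmod (\sum_i F i) <= \sum_i cmod (F i).
Proof.
apply: (big_ind2 (fun x y => cmod x <= y)) => //.
- by have /eqP -> : cmod (0 : C) == 0 by rewrite cmod_eq0.
- move=> x1 x2 y1 y2 h1 h2; apply: le_trans (cmodD _ _) _.
  exact: lerD.
Qed.

End Helpers.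

Section Main.
Variable R : realType.
Local Notation C := R[i].
Local Notation Re := (@complex.Re R).
Variable p : nat.
Variables (S Sh : 'M[R[i]]_p) (lam alpha : R) (Thd Zd : 'M[R[i]]_p).
Hypotheses (hS : hpd S) (hSh : hpsd Sh)
  (halpha : 0 < alpha <= 1) (hlam : 0 < lam)
  (hA3 : incoherence S (invmx S) alpha)
  (hThd : is_restricted_min (invmx S) Sh lam Thd)
  (hZdiag : forall q : 'I_p, Zd q q = 1)
  (hZsub : forall q r : 'I_p, q != r -> inM (invmx S) (q, r) ->
     (Thd q r != 0 -> Zd q r = Thd q r / `|Thd q r|) /\
     (Thd q r = 0 -> cmod (Zd q r) <= 1))
  (hKKT : forall q r : 'I_p, inM (invmx S) (q, r) ->
     Sh q r - invmx Thd q r + (lam%:C)%C * Zd q r = 0)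
  (hZperp : forall q r : 'I_p, ~~ inM (invmx S) (q, r) ->
     Zd q r = ((lam^-1)%:C)%C * (- Sh q r + invmx Thd q r))
  (hbound : Num.max (maxnorm (Sh - S)) (maxnorm (remainder (invmx S) Thd))
              <= alpha * lam / 8).

Let Ts := invmx S.
Let hSu : S \in unitmx := hpd_unit hS.
Let hThd_hpd : hpd Thd := let: And3 h _ _ := hThd in h.
Let hThd0 : forall q r, ~~ inM Ts (q, r) -> Thd q r = 0 :=
  let: And3 _ h _ := hThd in h.

Lemma Ts0 q r : ~~ inM Ts (q, r) -> Ts q r = 0.
Proof. by rewrite /inM negb_or /= => /andP [_]; rewrite negbK => /eqP. Qed.

Lemma ZM_le1 q r : inM Ts (q, r) -> cmod (Zd q r) <= 1.
Proof.
move=> hM; have [->|hqr] := eqVneq q r.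
  by rewrite hZdiag -(rmorph1 (real_complex R)) cmodR normr1.
have [h1 h2] := hZsub hqr hM.
have [h0|h0] := eqVneq (Thd q r) 0; first exact: h2.
rewrite h1 //.
have -> : cmod (Thd q r / `|Thd q r|) = 1.
  apply: (@complexI R); rewrite -cmodE normf_div normr_id divff //.
  by rewrite normr_eq0.
by [].
Qed.

Lemma KKT_all q r : Sh q r = invmx Thd q r - (lam%:C) * Zd q r.
Proof.
case: (boolP (inM Ts (q, r))) => hM.
  have h := hKKT hM; apply/eqP; rewrite -subr_eq0 -[X in _ == X]h.
  by apply/eqP; ring.
rewrite (hZperp hM) mulrA -rmorphM mulfV ?gt_eqF // rmorph1 mul1r.
ring.
Qed.

Lemma bounds q r : cmod ((Sh - S) q r) <= alpha * lam / 8 /\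
                   cmod (remainder Ts Thd q r) <= alpha * lam / 8.
Proof.
move: hbound; rewrite ge_max => /andP [h1 h2]; split.
  exact: le_trans (maxnorm_ge _ _ _) h1.
exact: le_trans (maxnorm_ge _ _ _) h2.
Qed.

Lemma entry_add n (A B : 'M[C]_n) i j : (A + B) i j = A i j + B i j.
Proof. by rewrite mxE. Qed.
Lemma entry_opp n (A : 'M[C]_n) i j : (- A) i j = - A i j.
Proof. by rewrite mxE. Qed.

Lemma part1 q r : ~~ inM Ts (q, r) -> cmod (Zd q r) < 1.
Proof.
move=> hM.
have hSherm : ct S = S by case: (proj1 (hpdE S) hS).
have hD0 : forall f, ~~ inM Ts f -> (Thd - Ts) f.1 f.2 = 0.
  move=> [a b] /= hf; rewrite entry_add entry_opp hThd0 // Ts0 //; ring.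
have hRm : forall a b, remainder Ts Thd a b =
    invmx Thd a b - S a b + (S *m (Thd - Ts) *m S) a b.
  by move=> a b; rewrite /remainder /Ts invmxK !(entry_add, entry_opp).
pose m := #|Mset Ts|.
pose d : 'cV[C]_m := \col_j (Thd - Ts) (enum_val j).1 (enum_val j).2.
pose u : 'cV[C]_m := \col_j (- (lam%:C) * Zd (enum_val j).1 (enum_val j).2
   - (Sh - S) (enum_val j).1 (enum_val j).2
   + remainder Ts Thd (enum_val j).1 (enum_val j).2).
have hGd : Gamma_MM S Ts *m d = u.
  apply/matrixP => i k; rewrite (ord1 k) (Gamma_MM_mul hSherm i hD0) [RHS]mxE.
  by rewrite hRm !(entry_add, entry_opp) KKT_all; ring.
have hd : d = invmx (Gamma_MM S Ts) *m u.
  by rewrite -hGd mulKmx // (Gamma_MM_unit Ts hSherm hS).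
set c := Gamma_eM S Ts (q, r) *m invmx (Gamma_MM S Ts).
have hZe : lam%:C * Zd q r = - (Sh - S) q r + remainder Ts Thd q r
    - (c *m u) 0 0.
  rewrite /c -mulmxA -hd (Gamma_eM_mul (Thstar := Ts) hSherm (q, r) hD0) /=.
  rewrite (hZperp hM) mulrA -rmorphM mulfV ?gt_eqF // rmorph1 mul1r.
  by rewrite hRm !(entry_add, entry_opp); ring.
have hc : \sum_j cmod (c 0 j) <= 1 - alpha by exact: hA3.
case/andP: halpha => ha0 ha1.
have hub : forall j, cmod (u j 0) <= lam + alpha * lam / 4.
  move=> j; rewrite mxE.
  have hMj : inM Ts (enum_val j) by have := enum_valP j; rewrite inE.
  have := ZM_le1 (q := (enum_val j).1) (r := (enum_val j).2).
  rewrite -surjective_pairing => /(_ hMj) hz.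
  have [b1 b2] := bounds (enum_val j).1 (enum_val j).2.
  apply: le_trans (cmodD _ _) _.
  apply: le_trans (lerD (cmodD _ _) (lexx _)) _.
  rewrite cmodN mulNr cmodN cmodM cmodR (ger0_norm (ltW hlam)).
  have : lam * cmod (Zd (enum_val j).1 (enum_val j).2) <= lam.
    by have := ler_wpM2l (ltW hlam) hz; rewrite mulr1.
  by move: b1 b2; lra.
have hal : 0 < alpha * lam by apply: mulr_gt0.
have hB : 0 <= lam + alpha * lam / 4.
  by apply: addr_ge0; [exact: ltW | apply: divr_ge0; [exact: ltW | by []]].
have hcu : cmod ((c *m u) 0 0) <= (lam + alpha * lam / 4) * (1 - alpha).
  rewrite mxE; apply: le_trans (cmod_sum _) _.
  apply: (le_trans (y := \sum_j cmod (c 0 j) * (lam + alpha * lam / 4))).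
    apply: ler_sum => j _; rewrite cmodM; apply: ler_wpM2l; first exact: cmod_ge0.
    exact: hub.
  by rewrite -mulr_suml mulrC; apply: ler_wpM2l.
have hlZ : lam * cmod (Zd q r) <= alpha * lam / 4 + (lam + alpha * lam / 4) * (1 - alpha).
  have [b1 b2] := bounds q r.
  have -> : lam * cmod (Zd q r) = cmod (lam%:C * Zd q r).
    by rewrite cmodM cmodR (ger0_norm (ltW hlam)).
  rewrite hZe.
  apply: le_trans (cmodD _ _) _; rewrite cmodN.
  apply: le_trans (lerD (cmodD _ _) (lexx _)) _.
  by rewrite cmodN; move: b1 b2 hcu; lra.
have ha2 : 0 <= alpha * alpha * lam by rewrite mulr_ge0 ?mulr_ge0 ?ltW.
have hlt : lam * cmod (Zd q r) < lam * 1 by rewrite mulr1; move: hlZ; nra.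
by rewrite ltr_pM2l in hlt.
Qed.

Lemma Z_le1 q r : cmod (Zd q r) <= 1.
Proof.
case: (boolP (inM Ts (q, r))) => hM; first exact: ZM_le1.
exact: ltW (part1 hM).
Qed.

Lemma ShE : Sh = invmx Thd + ((- lam)%:C) *: Zd.
Proof.
apply/matrixP => a b; rewrite entry_add mxE KKT_all rmorphN.
by ring.
Qed.

Lemma ReTrSh (Th : 'M[C]_p) : Re (\tr (Sh *m Th)) =
  Re (\tr (invmx Thd *m Th)) - lam * Re (\tr (Zd *m Th)).
Proof.
rewrite ShE mulmxDl -scalemxAl mxtraceD mxtraceZ ReD ReMR.
by rewrite mulNr.
Qed.

Lemma trZ_le (Th : 'M[C]_p) :
  Re (\tr (Zd *m Th)) <= \sum_q \sum_r cmod (Th q r).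
Proof.
apply: le_trans (Re_ge_cmod _) _.
rewrite /mxtrace; apply: le_trans (cmod_sum _) _.
rewrite [X in _ <= X]exchange_big /=.
apply: ler_sum => i _; rewrite mxE; apply: le_trans (cmod_sum _) _.
apply: ler_sum => j _; rewrite cmodM.
have := Z_le1 i j; have := cmod_ge0 (Th j i); nra.
Qed.

Lemma trZ_Thd : Re (\tr (Zd *m Thd)) = \sum_q \sum_r cmod (Thd q r).
Proof.
have hTh : ct Thd = Thd by case: (proj1 (hpdE Thd) hThd_hpd).
have hc : forall a b, Thd b a = conjc (Thd a b).
  by move=> a b; rewrite -[in LHS]hTh ctE.
have key : forall q r, Zd q r * Thd r q = (cmod (Thd q r))%:C.
  move=> q r; rewrite hc.
  have [->|hqr] := eqVneq q r.
    have hp := hpd_diag r hThd_hpd.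
    rewrite hZdiag mul1r conjc_pos //.
    have [e hpos] := pos_real hp.
    by rewrite {2}e cmodR ger0_norm ?ltW.
  case: (boolP (inM Ts (q, r))) => hM; last first.
    by rewrite hThd0 // rmorph0 mulr0 -cmodE normr0.
  have [h1 _] := hZsub hqr hM.
  have [h0|h0] := eqVneq (Thd q r) 0.
    by rewrite h0 rmorph0 mulr0 -cmodE normr0.
  rewrite h1 // -cmodE mulrAC -sqr_normc expr2 mulfK //.
  by rewrite normr_eq0.
rewrite /mxtrace.
have -> : \sum_i (Zd *m Thd) i i = (\sum_i \sum_j cmod (Thd i j))%:C.
  rewrite rmorph_sum; apply: eq_bigr => i _; rewrite mxE rmorph_sum.
  by apply: eq_bigr => j _; rewrite key.
by [].
Qed.

Lemma objE (Th : 'M[C]_p) : glasso_obj Sh lam Th =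
  - ln (Re (\det Th)) + Re (\tr (invmx Thd *m Th)) - lam * Re (\tr (Zd *m Th))
  + lam * \sum_q \sum_r cmod (Th q r).
Proof. by rewrite /glasso_obj ReTrSh addrA. Qed.

Lemma obj_Thd : glasso_obj Sh lam Thd = - ln (Re (\det Thd)) + p%:R.
Proof.
rewrite objE trZ_Thd mulVmx ?hpd_unit // mxtrace1 Re_nat.
by ring.
Qed.

Lemma part2 : is_glasso_min Sh lam Thd.
Proof.
split=> // Th' hTh'.
have [_ _ hle _] := LD2 hThd_hpd hTh'.
have hz : lam * Re (\tr (Zd *m Th')) <= lam * \sum_q \sum_r cmod (Th' q r).
  by apply: ler_wpM2l; [exact: ltW | exact: trZ_le].
rewrite obj_Thd objE.
by move: hle hz; lra.
Qed.

Lemma part3 (Th : 'M[C]_p) : is_glasso_min Sh lam Th -> Th = Thd.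
Proof.
move=> [hTh hmin].
have := hmin _ hThd_hpd; rewrite obj_Thd objE => hle.
have [_ _ _ heq] := LD2 hThd_hpd hTh.
have hz : lam * Re (\tr (Zd *m Th)) <= lam * \sum_q \sum_r cmod (Th q r).
  by apply: ler_wpM2l; [exact: ltW | exact: trZ_le].
by apply: heq; move: hle hz; lra.
Qed.

End Main.

Unset Implicit Arguments.
Local Open Scope ring_scope.

Theorem mainTheorem7 (R : realType) (p : nat)
  (S Sh : 'M[R[i]]_p) (lam alpha : R) (Thd Zd : 'M[R[i]]_p)
  (hS : hpd S) (hSh : hpsd Sh)
  (halpha : 0 < alpha <= 1) (hlam : 0 < lam)
  (hA3 : incoherence S (invmx S) alpha)
  (hThd : is_restricted_min (invmx S) Sh lam Thd)
  (hZdiag : forall q : 'I_p, Zd q q = 1)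
  (hZsub : forall q r : 'I_p, q != r -> inM (invmx S) (q, r) ->
     (Thd q r != 0 -> Zd q r = Thd q r / `|Thd q r|) /\
     (Thd q r = 0 -> cmod (Zd q r) <= 1))
  (hKKT : forall q r : 'I_p, inM (invmx S) (q, r) ->
     Sh q r - invmx Thd q r + (lam%:C)%C * Zd q r = 0)
  (hZperp : forall q r : 'I_p, ~~ inM (invmx S) (q, r) ->
     Zd q r = ((lam^-1)%:C)%C * (- Sh q r + invmx Thd q r))
  (hbound : Num.max (maxnorm (Sh - S)) (maxnorm (remainder (invmx S) Thd))
              <= alpha * lam / 8) :
  (forall q r : 'I_p, ~~ inM (invmx S) (q, r) -> cmod (Zd q r) < 1) /\
  is_glasso_min Sh lam Thd /\
  (forall Th : 'M[R[i]]_p, is_glasso_min Sh lam Th -> Th = Thd).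

Proof.
split; [| split].
- by move=> q r hM; apply: part1 hM; eassumption.
- by apply: part2; eassumption.
- by move=> Th hTh; apply: part3 hTh; eassumption.
Qed.
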